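(* Let $M,T\ge1$, $\mathcal B=\{B_1<\dots<B_{|\mathcal B|}\}\subset[0,1]$ finite, $\bm v\in[0,1]^M$ with $v_1\ge\dots\ge v_M$, and fix competing bid vectors $\bm b^t_-$, $t\in[T]$. Let $\pi^1,\dots,\pi^T$ be policies (as defined in the context) and let $\bm q^t=q(\pi^t)$ be their node probability measures, and suppose in round $t$ the agent draws $\bm b^t$ according to $\pi^t$. Then $$\textsc{Regret}_{\mathcal B}=\max_{\bm q\in\mathcal Q}\sum_{t=1}^T\langle\bm q-\bm q^t,\bm w^t\rangle,$$ where $\bm w^t=(w^t_m(b))_{m\in[M],b\in\mathcal B}$ and $\langle\bm x,\bm y\rangle=\sum_{m\in[M]}\sum_{b\in\mathcal B}x_m(b)y_m(b)$.
   Context: $w^t_m(b)=(v_m-b)\mathbf 1_{b\ge b^t_{-m}}$ and $\mu^t(\bm b)=\sum_m w^t_m(b_m)$ is the agent's pay-as-bid utility in round $t$, where $\bm b^t_-=(b^t_{-1}\le\dots\le b^t_{-\overline M})$, $\overline M\ge M$. $\mathcal B^{+M}$ is the set of non-increasing $M$-vectors with entries in $\mathcal B$, and $\textsc{Regret}_{\mathcal B}=\max_{\bm b\in\mathcal B^{+M},\,b_m\le v_m\forall m}\sum_t\mu^t(\bm b)-\mathbb E[\sum_t\mu^t(\bm b^t)]$. With $b_0=\max\mathcal B$, a policy is $\pi\in[0,1]^{\{0,\dots,M-1\}\times\mathcal B\times\mathcal B}$ with $\pi((m,b),b')=0$ for $b'>b$ and $\sum_{b'\le b}\pi((m,b),b')=1$;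 bids are drawn as $b_1\sim\pi((0,b_0),\cdot)$, $b_{m+1}\sim\pi((m,b_m),\cdot)$. Its node measure $q(\pi)$ is $q_1(b)=\pi((0,b_0),b)$, $q_{m+1}(b)=\sum_{b'}q_m(b')\pi((m,b'),b)$. $\mathcal Q=\{\bm q\in[0,1]^{M\times\mathcal B}:\sum_bq_m(b)=1\ \forall m,\ \sum_{b\le b'}q_{m+1}(b)\ge\sum_{b\le b'}q_m(b)\ \forall b'\in\mathcal B,m\in[M-1]\}$. *)

(* Defs.v *)
From HB Require Import structures.
From mathcomp Require Import all_boot all_order all_algebra.
From mathcomp Require Import reals.
Set Implicit Arguments. Unset Strict Implicit. Unset Printing Implicit Defensive.
Import Order.TTheory GRing.Theory Num.Theory.
Local Open Scope ring_scope.

Section PayAsBid.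
Variables (R : realType) (M K : nat).

(* w^t_m(b) = (v_m - b) 1_{b >= b^t_{-m}};  bm m = b^t_{-m} *)
Definition w (v bm : 'I_M -> R) (m : 'I_M) (b : R) : R :=
  (v m - b) * (if bm m <= b then 1 else 0).

Definition mu (v bm : 'I_M -> R) (b : 'I_M -> R) : R :=
  \sum_(m : 'I_M) w v bm m (b m).

(* B : 'I_K -> R is the grid B_1 < ... < B_K; bid vectors are index vectors *)
Definition nonincr_bids (B : 'I_K -> R) (idx : 'I_M -> 'I_K) : Prop :=
  forall m1 m2 : 'I_M, (m1 <= m2)%N -> B (idx m2) <= B (idx m1).

(* policy pi : {0..M-1} x B x B -> [0,1]; pi m b b' = pi((m,b),b') *)
Definition is_policy (B : 'I_K -> R) (pi : 'I_M -> 'I_K -> 'I_K -> R) : Prop :=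
  [/\ (forall m b b', 0 <= pi m b b' <= 1),
      (forall m b b', B b < B b' -> pi m b b' = 0) &
      (forall m b, \sum_(b' : 'I_K | B b' <= B b) pi m b b' = 1)].

(* Probability that the policy (starting from node (0,b_0), b_0 = B top)
   draws the bid-index vector idx: b_1 ~ pi((0,b_0),.), b_{m+1} ~ pi((m,b_m),.)
   (0-based: bid j>0 is drawn from pi j (idx (j-1)) .) *)
Definition prob (pi : 'I_M -> 'I_K -> 'I_K -> R) (top : 'I_K)
  (idx : 'I_M -> 'I_K) : R :=
  (\prod_(j : 'I_M | val j == 0%N) pi j top (idx j)) *
  \prod_(i : 'I_M) \prod_(j : 'I_M | val j == (val i).+1) pi j (idx i) (idx j).

Definition expected_mu (B : 'I_K -> R) (pi : 'I_M -> 'I_K -> 'I_K -> R)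
  (top : 'I_K) (v bm : 'I_M -> R) : R :=
  \sum_(idx : {ffun 'I_M -> 'I_K}) prob pi top idx * mu v bm (fun m => B (idx m)).

(* node measure q(pi): q_1(b) = pi((0,b_0),b),
   q_{m+1}(b) = sum_b' q_m(b') pi((m,b'),b)   (0-based in nat) *)
Fixpoint qnode (pi : 'I_M -> 'I_K -> 'I_K -> R) (top : 'I_K) (m : nat)
  (b : 'I_K) {struct m} : R :=
  match m with
  | 0%N => match (insub 0%N : option 'I_M) with
           | Some i => pi i top b | None => 0 end
  | m'.+1 => match (insub m'.+1 : option 'I_M) with
             | Some i => \sum_(b' : 'I_K) qnode pi top m' b' * pi i b' b
             | None => 0 end
  end.

Definition node_measure (pi : 'I_M -> 'I_K -> 'I_K -> R) (top : 'I_K)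
  : 'I_M -> 'I_K -> R := fun m b => qnode pi top (val m) b.

Definition inQ (B : 'I_K -> R) (q : 'I_M -> 'I_K -> R) : Prop :=
  [/\ (forall m b, 0 <= q m b <= 1),
      (forall m, \sum_(b : 'I_K) q m b = 1) &
      (forall m1 m2 : 'I_M, val m2 = (val m1).+1 -> forall b' : 'I_K,
         \sum_(b : 'I_K | B b <= B b') q m1 b <= \sum_(b : 'I_K | B b <= B b') q m2 b)].

Definition wvec (B : 'I_K -> R) (v bm : 'I_M -> R) : 'I_M -> 'I_K -> R :=
  fun m b => w v bm m (B b).

Definition inner (x y : 'I_M -> 'I_K -> R) : R :=
  \sum_(m : 'I_M) \sum_(b : 'I_K) x m b * y m b.

End PayAsBid.

Definition ismax (R : realType) (S : R -> Prop) (r : R) : Prop :=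
  S r /\ forall x, S x -> x <= r.

(* Main.v *)
Require Import Defs.
From HB Require Import structures.
From mathcomp Require Import all_boot all_order all_algebra.
From mathcomp Require Import reals.
Import Order.TTheory GRing.Theory Num.Theory.
Local Open Scope ring_scope.
From mathcomp Require Import ring zify.
Set Implicit Arguments. Unset Strict Implicit. Unset Printing Implicit Defensive.


Section Chain.
Variables (R : realType) (J : finType) (p : nat -> J -> J -> R) (top : J).
Hypothesis hp : forall i b, \sum_x p i b x = 1.

Definition ext N (g : {ffun 'I_N -> J}) (x : J) : {ffun 'I_N.+1 -> J} :=
  [ffun i : 'I_N.+1 => if unlift ord_max i is Some j then g j else x].
Definition restr N (f : {ffun 'I_N.+1 -> J}) : {ffun 'I_N -> J} :=
  [ffun j => f (lift ord_max j)].

Lemma ext_max N g x : @ext N g x ord_max = x.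
Proof. by rewrite ffunE unlift_none. Qed.

Lemma ext_lift N g x j : @ext N g x (lift ord_max j) = g j.
Proof. by rewrite ffunE liftK. Qed.

Lemma ext_lt N g x (i : 'I_N.+1) (j : 'I_N) : val i = val j -> @ext N g x i = g j.
Proof.
move=> e; have -> : i = lift ord_max j by apply: ord_inj; rewrite lift_max.
exact: ext_lift.
Qed.

Lemma sum_split N (F : {ffun 'I_N.+1 -> J} -> R) :
  \sum_f F f = \sum_(g : {ffun 'I_N -> J}) \sum_x F (ext g x).
Proof.
rewrite pair_big /=.
rewrite (reindex (fun pr : {ffun 'I_N -> J} * J => ext pr.1 pr.2)) //=.
apply: onW_bij.
exists (fun f => (restr f, f ord_max)).
  move=> [g x] /=; congr pair; last exact: ext_max.
  by apply/ffunP => j; rewrite ffunE ext_lift.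
move=> f /=; apply/ffunP => i; rewrite ffunE.
by case: unliftP => [j ->|->]; rewrite ?ffunE.
Qed.

Definition prevf N (f : {ffun 'I_N.+1 -> J}) (i : 'I_N.+1) : J :=
  if val i is i'.+1 then f (inord i') else top.

Definition Pch N (f : {ffun 'I_N.+1 -> J}) : R :=
  \prod_(i : 'I_N.+1) p i (prevf f i) (f i).

Fixpoint Qm (m : nat) (b : J) : R :=
  match m with 0%N => p 0 top b | m'.+1 => \sum_b' Qm m' b' * p m'.+1 b' b end.

Lemma Pch_ext N (g : {ffun 'I_N.+1 -> J}) x :
  Pch (ext g x) = Pch g * p N.+1 (g ord_max) x.
Proof.
rewrite /Pch big_ord_recr /= ext_max; congr (_ * _); last first.
  rewrite /prevf /=; congr p; apply: ext_lt => /=; rewrite inordK //.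
apply: eq_bigr => i _.
have e : widen_ord (leqnSn N.+1) i = lift ord_max i.
  by apply: ord_inj; rewrite lift_max.
rewrite e ext_lift /prevf /=; case: (val i) (ltn_ord i) => [|i'] hi //.
rewrite /bump leqNgt hi /= (@ext_lt _ _ _ _ (inord i')) //= !inordK //; lia.
Qed.

Lemma marg N (m : 'I_N.+1) (g : J -> R) :
  \sum_f Pch f * g (f m) = \sum_b Qm m b * g b.
Proof.
elim: N m g => [|N IH] m g.
  rewrite sum_split /= (eq_bigr (fun _ => \sum_x p 0 top x * g x)); last first.
    move=> h _; apply: eq_bigr => x _.
    have e0 : (ord0 : 'I_1) = ord_max by apply: val_inj.
    have -> : m = ord_max by apply: val_inj; case: m => [[]].
    by rewrite /Pch big_ord1 /prevf /= e0 ext_max.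
  rewrite sumr_const card_ffun card_ord expn0 mulr1n.
  by have -> : m = ord0 by apply: val_inj; case: m => [[]].
rewrite sum_split.
case: (unliftP ord_max m) => [j ->|->].
  have -> : nat_of_ord (lift ord_max j) = j by rewrite /= /bump leqNgt ltn_ord.
  rewrite -IH; apply: eq_bigr => h _.
  rewrite (eq_bigr (fun x => Pch h * g (h j) * p N.+1 (h ord_max) x)); last first.
    by move=> x _; rewrite Pch_ext ext_lift; ring.
  by rewrite -mulr_sumr hp mulr1.
rewrite (eq_bigr (fun h => Pch h * (\sum_x p N.+1 (h ord_max) x * g x))); last first.
  move=> h _; rewrite mulr_sumr; apply: eq_bigr => x _.
  by rewrite Pch_ext ext_max; ring.
rewrite (IH ord_max (fun b => \sum_x p N.+1 b x * g x)) /=.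
rewrite (eq_bigr (fun b => \sum_x Qm N b * p N.+1 b x * g x)); last first.
  by move=> b _; rewrite mulr_sumr; apply: eq_bigr => x _; ring.
rewrite exchange_big; apply: eq_bigr => x _.
by rewrite -mulr_suml.
Qed.

End Chain.



Section Abel.
Variable R : realType.

Definition Fs (q : nat -> R) (c : nat) : R := \sum_(i < c) q i.

Lemma abel (q h : nat -> R) N :
  \sum_(i < N.+1) q i * h i =
  Fs q N.+1 * h N - \sum_(i < N) Fs q i.+1 * (h i.+1 - h i).
Proof.
elim: N => [|N IH]; first by rewrite /Fs !big_ord1 big_ord0 subr0.
rewrite big_ord_recr /= IH big_ord_recr /=.
have -> : Fs q N.+2 = Fs q N.+1 + q N.+1 by rewrite /Fs big_ord_recr.
ring.
Qed.

Lemma dom k (q1 q2 h : 'I_k.+1 -> R) :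
  \sum_b q1 b = \sum_b q2 b ->
  (forall c : 'I_k.+1, \sum_(b : 'I_k.+1 | (b <= c)%N) q1 b <= \sum_(b : 'I_k.+1 | (b <= c)%N) q2 b) ->
  (forall b c : 'I_k.+1, (b <= c)%N -> h b <= h c) ->
  \sum_b q2 b * h b <= \sum_b q1 b * h b.
Proof.
move=> e hd hh.
have conv (q : 'I_k.+1 -> R) c : (c <= k)%N ->
    Fs (fun i => q (inord i)) c.+1 = \sum_(b : 'I_k.+1 | (b <= (inord c : 'I_k.+1))%N) q b.
  move=> ck; rewrite /Fs. rewrite (@big_ord_widen _ _ _ c.+1 k.+1 (fun i => q (inord i))) //.
  rewrite big_mkcond [RHS]big_mkcond.
  by apply: eq_bigr => i _; rewrite inordK ?ltnS // inord_val.
have conv2 (q g : 'I_k.+1 -> R) : \sum_b q b * g b = \sum_(i < k.+1) q (inord i) * g (inord i).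
  by apply: eq_bigr => i _; rewrite inord_val.
rewrite (conv2 q2 h) (conv2 q1 h).
rewrite (abel (fun i => q2 (inord i)) (fun i => h (inord i))).
rewrite (abel (fun i => q1 (inord i)) (fun i => h (inord i))).
have conv3 (q : 'I_k.+1 -> R) : Fs (fun i => q (inord i)) k.+1 = \sum_b q b.
  by rewrite /Fs; apply: eq_bigr => i _; rewrite inord_val.
rewrite !conv3 e.
rewrite lerD2l lerN2; apply: ler_sum => i _.
apply: ler_wpM2r.
  rewrite subr_ge0; apply: hh; rewrite !inordK //; have := ltn_ord i; lia.
rewrite !conv; [exact: hd | have := ltn_ord i; lia | have := ltn_ord i; lia].
Qed.

End Abel.




Section Hdef.
Variables (R : realType) (n k : nat) (W : 'I_n.+1 -> 'I_k.+1 -> R).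
Local Notation F := {ffun 'I_n.+1 -> 'I_k.+1}.

Definition nonincr (idx : F) : bool :=
  [forall i : 'I_n.+1, forall j : 'I_n.+1, (i <= j)%N ==> (idx j <= idx i)%N].
Definition Pm (m : nat) (b : 'I_k.+1) (idx : F) : bool :=
  nonincr idx && [forall j : 'I_n.+1, (m <= j)%N ==> (idx j <= b)%N].
Definition S (m : nat) (idx : F) : R := \sum_(j : 'I_n.+1 | (m <= j)%N) W j (idx j).
Definition idx0 : F := [ffun _ => ord0].
Definition Hopt m b : F := Order.arg_max idx0 (Pm m b) (S m).
Definition H m b := S m (Hopt m b).

Lemma HP m b : Pm m b (Hopt m b) /\ forall i, Pm m b i -> S m i <= H m b.
Proof.
have h0 : Pm m b idx0.
  rewrite /Pm; apply/andP; split.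
    by apply/forallP => i; apply/forallP => j; rewrite !ffunE leqnn implybT.
  by apply/forallP => j; rewrite ffunE implybT.
rewrite /H /Hopt; case: (@arg_maxP _ _ F idx0 (Pm m b) (S m) h0) => i0 Pi hi.
by split => // j /hi.
Qed.

Lemma H_mono m (b c : 'I_k.+1) : (b <= c)%N -> H m b <= H m c.
Proof.
move=> bc; have [/andP [h1 /forallP h2] _] := HP m b.
apply: (proj2 (HP m c)); rewrite /Pm h1 /=; apply/forallP => j.
by apply/implyP => /(implyP (h2 j)) hj; apply: leq_trans hj bc.
Qed.

Lemma H_last b : H n.+1 b = 0.
Proof. by rewrite /H /S big_pred0 // => j; rewrite leqNgt ltn_ord. Qed.

Lemma H_step (m : 'I_n.+1) b : W m b + H m.+1 b <= H m b.
Proof.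
have [/andP [/forallP h1 /forallP h2] _] := HP m.+1 b.
set g := Hopt m.+1 b in h1 h2 *.
pose g' : F := [ffun j : 'I_n.+1 => if (j < m)%N then ord_max else if j == m then b else g j].
have Pg' : Pm m b g'.
  have lem : forall x : 'I_k.+1, (x <= (ord_max : 'I_k.+1))%N.
    by move=> x; rewrite /= -ltnS ltn_ord.
  apply/andP; split.
    apply/forallP => i; apply/forallP => j; apply/implyP => ij; rewrite !ffunE.
    case: (ltnP i m) => im; first exact: lem.
    have jm : ~~ (j < m)%N by rewrite -leqNgt (leq_trans im ij).
    rewrite (negbTE jm).
    case: (eqVneq i m) => [ie|ine]; case: (eqVneq j m) => [je|jne] //.
    - apply: (implyP (h2 j)); subst i.
      by rewrite ltn_neqAle ij andbT; apply: contra_neq jne => e; apply: val_inj.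
    - by subst j; move: ij im ine => ij im ine; exfalso;
         move: ine; rewrite -(inj_eq val_inj) /= eqn_leq ij im.
    - have mi : (m < i)%N by rewrite ltn_neqAle im andbT; apply: contra_neq ine => e; apply: val_inj.
      apply: (implyP (forallP (h1 i) j)) => //.
  apply/forallP => j; apply/implyP => mj; rewrite ffunE ltnNge mj /=.
  case: eqVneq => // jne; apply: (implyP (h2 j)).
  by rewrite ltn_neqAle mj andbT; apply: contra_neq jne => e; apply: val_inj.
apply: le_trans (proj2 (HP m b) _ Pg').
rewrite /S (bigD1 m) //= ffunE ltnn eqxx; apply: lerD => //.
rewrite /H le_eqVlt; apply/orP; left; apply/eqP.
apply: eq_big => j.
  by rewrite ltn_neqAle andbC -(inj_eq val_inj) eq_sym.
move=> mj; rewrite ffunE ltnNge (ltnW mj) /=.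
case: eqVneq => // e; by rewrite e ltnn in mj.
Qed.

Lemma main_bound (q : 'I_n.+1 -> 'I_k.+1 -> R) :
  (forall m b, 0 <= q m b) -> (forall m, \sum_b q m b = 1) ->
  (forall m1 m2 : 'I_n.+1, val m2 = (val m1).+1 -> forall c : 'I_k.+1,
     \sum_(b : 'I_k.+1 | (b <= c)%N) q m1 b <= \sum_(b : 'I_k.+1 | (b <= c)%N) q m2 b) ->
  \sum_m \sum_b q m b * W m b <= H 0 ord_max.
Proof.
move=> q0 q1 qd.
pose E (i : nat) := \sum_b q (inord i) b * H i b.
have step : forall m : 'I_n.+1, \sum_b q m b * W m b <= E m - E m.+1.
  move=> m.
  have h1 : \sum_b q m b * W m b <= \sum_b q m b * H m b - \sum_b q m b * H m.+1 b.
    rewrite -sumrB; apply: ler_sum => b _; rewrite -mulrBr; apply: ler_wpM2l => //.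
    by rewrite lerBrDr H_step.
  apply: le_trans h1 _.
  rewrite /E inord_val lerD2l lerN2.
  case: (ltnP m.+1 n.+1) => hm.
    apply: dom.
    - by rewrite !q1.
    - by move=> c; apply: qd; rewrite /= inordK.
    - by move=> b c bc; apply: H_mono.
  have -> : m.+1 = n.+1 by apply/eqP; rewrite eqn_leq hm ltn_ord.
  by rewrite !big1 // => b _; rewrite H_last mulr0.
apply: le_trans (ler_sum _ (fun m _ => step m)) _.
have tel : \sum_(m < n.+1) (E m - E m.+1) = E 0%N - E n.+1.
  rewrite -(big_mkord xpredT (fun m => E m - E m.+1)).
  rewrite (eq_bigr (fun m => - (E m.+1 - E m))); last by move=> i _; rewrite opprB.
  by rewrite sumrN telescope_sumr // opprB.
rewrite tel.
have -> : E n.+1 = 0 by rewrite /E big1 // => b _; rewrite H_last mulr0.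
rewrite subr0 /E.
apply: (@le_trans _ _ (\sum_b q (inord 0) b * H 0 ord_max)).
  apply: ler_sum => b _; apply: ler_wpM2l => //; by apply: H_mono; rewrite /= -ltnS ltn_ord.
by rewrite -mulr_suml q1 mul1r.
Qed.

End Hdef.



Lemma insub_inord n x : (x < n.+1)%N -> (insub x : option 'I_n.+1) = Some (inord x).
Proof.
move=> h; case: insubP => [u _ hu|]; last by rewrite h.
by congr Some; apply: val_inj; rewrite hu /= inordK.
Qed.

Lemma expected_inner (R : realType) n k (B : 'I_k.+1 -> R)
  (pi : 'I_n.+1 -> 'I_k.+1 -> 'I_k.+1 -> R) (hpi : is_policy B pi) v bm :
  expected_mu B pi ord_max v bm = inner (node_measure pi ord_max) (wvec B v bm).
Proof.
case: hpi => _ hz hs.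
pose p i := pi (inord i).
have hp : forall i b, \sum_x p i b x = 1.
  move=> i b; rewrite (bigID (fun x => B x <= B b)) /= hs big1 ?addr0 // => x.
  by rewrite /p -ltNge => /hz ->.
have eprob : forall idx : {ffun 'I_n.+1 -> 'I_k.+1}, prob pi ord_max idx = Pch p ord_max idx.
  move=> idx; rewrite /prob /Pch [RHS]big_ord_recl; congr (_ * _).
    rewrite (big_pred1 ord0) //.
    by rewrite /p /=; congr pi; apply: val_inj; rewrite /= inordK.
  rewrite big_ord_recr /= [X in _ * X]big_pred0 ?mulr1; last first.
    by move=> j; apply/negbTE; rewrite neq_ltn ltn_ord.
  apply: eq_bigr => i _.
  rewrite (big_pred1 (lift ord0 i)); last by move=> j; rewrite /= -(inj_eq val_inj) /= /bump /= add1n.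
  rewrite /p /prevf /=; congr pi; try congr (fun_of_fin idx); apply: val_inj; rewrite /= inordK //; rewrite /bump /=; have := ltn_ord i; lia.
have eq : forall (m : 'I_n.+1) b, node_measure pi ord_max m b = Qm p ord_max m b.
  move=> [m hm] b; rewrite /node_measure /=.
  elim: m hm b => [|m IH] hm b /=; first by rewrite insub_inord.
  rewrite insub_inord //; apply: eq_bigr => b' _; rewrite IH //; exact: ltnW.
rewrite /expected_mu /inner.
under eq_bigr => idx _ do rewrite eprob /mu mulr_sumr.
rewrite exchange_big; apply: eq_bigr => m _.
have := marg ord_max hp m (fun b => wvec B v bm m b); rewrite /wvec => ->.
by apply: eq_bigr => b _; rewrite eq.
Qed.


Unset Implicit Arguments.

Lemma sum_ind (R : realType) k (a : 'I_k.+1) (P : pred 'I_k.+1) :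
  \sum_(b | P b) (if a == b then 1 else 0 : R) = if P a then 1 else 0.
Proof.
rewrite big_mkcond (bigD1 a) //= eqxx big1 ?addr0; first by case: (P a).
by move=> b hb; rewrite eq_sym (negbTE hb); case: (P b).
Qed.

Lemma sum_ind1 (R : realType) k (a : 'I_k.+1) :
  \sum_b (if a == b then 1 else 0 : R) = 1.
Proof. exact: (sum_ind R k a xpredT). Qed.

Theorem lemma2 (R : realType) (M T k Mbar : nat)
  (hM : (0 < M)%N) (hT : (0 < T)%N) (hMbar : (M <= Mbar)%N)
  (B : 'I_k.+1 -> R)
  (hB01 : forall i, 0 <= B i <= 1)
  (hBinc : forall i j : 'I_k.+1, (i < j)%N -> B i < B j)
  (v : 'I_M -> R)
  (hv01 : forall m, 0 <= v m <= 1)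
  (hvdec : forall m1 m2 : 'I_M, (m1 <= m2)%N -> v m2 <= v m1)
  (bminus : 'I_T -> 'I_Mbar -> R)
  (hbminus : forall t (i j : 'I_Mbar), (i <= j)%N -> bminus t i <= bminus t j)
  (pi : 'I_T -> 'I_M -> 'I_k.+1 -> 'I_k.+1 -> R)
  (hpi : forall t, is_policy B (pi t))
  (hfeas : exists idx : {ffun 'I_M -> 'I_k.+1},
             nonincr_bids B idx /\ forall m, B (idx m) <= v m) :
  let bm := fun (t : 'I_T) (m : 'I_M) => bminus t (widen_ord hMbar m) in
  let regret_set := fun x : R =>
    exists idx : {ffun 'I_M -> 'I_k.+1},
      [/\ nonincr_bids B idx, (forall m, B (idx m) <= v m) &
          x = \sum_(t : 'I_T) mu v (bm t) (fun m => B (idx m))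
              - \sum_(t : 'I_T) expected_mu B (pi t) ord_max v (bm t)] in
  let q_set := fun x : R =>
    exists q : 'I_M -> 'I_k.+1 -> R,
      inQ B q /\
      x = \sum_(t : 'I_T)
            inner (fun m b => q m b - node_measure (pi t) ord_max m b)
                  (wvec B v (bm t)) in
  exists r : R, ismax regret_set r /\ ismax q_set r.
Proof.
destruct M as [|n]; first by [].
move=> bm regret_set q_set.
pose W (m : 'I_n.+1) (b : 'I_k.+1) := \sum_t wvec B v (bm t) m b.
pose C := \sum_t expected_mu B (pi t) ord_max v (bm t).
have K1 : forall q : 'I_n.+1 -> 'I_k.+1 -> R,
    \sum_t inner (fun m b => q m b - node_measure (pi t) ord_max m b) (wvec B v (bm t))
    = \sum_m \sum_b q m b * W m b - C.
  move=> q.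
  have innB : forall x y w : 'I_n.+1 -> 'I_k.+1 -> R,
      inner (fun m b => x m b - y m b) w = inner x w - inner y w.
    move=> x y w; rewrite /inner -sumrB; apply: eq_bigr => m _.
    by rewrite -sumrB; apply: eq_bigr => b _; rewrite mulrBl.
  under eq_bigr => t _ do rewrite innB.
  rewrite sumrB /C; congr (_ - _); last first.
    by apply: eq_bigr => t _; rewrite expected_inner.
  rewrite /inner exchange_big; apply: eq_bigr => m _.
  rewrite exchange_big; apply: eq_bigr => b _.
  by rewrite /W mulr_sumr.
have K2 : forall idx : {ffun 'I_n.+1 -> 'I_k.+1},
    \sum_t mu v (bm t) (fun m => B (idx m)) = \sum_m W m (idx m).
  by move=> idx; rewrite /mu exchange_big.
have K3 : forall idx : {ffun 'I_n.+1 -> 'I_k.+1},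
    \sum_m \sum_b (if idx m == b then 1 else 0) * W m b = \sum_m W m (idx m).
  move=> idx; apply: eq_bigr => m _.
  rewrite (bigD1 (idx m)) //= eqxx mul1r big1 ?addr0 // => b hb.
  by rewrite eq_sym (negbTE hb) mul0r.
have Bmono : forall i j : 'I_k.+1, (i <= j)%N -> B i <= B j.
  move=> i j; rewrite leq_eqVlt => /orP [/eqP e|h].
    by have -> : i = j by apply: val_inj.
  exact: ltW (hBinc _ _ h).
have Ble : forall i j : 'I_k.+1, (B i <= B j) = (i <= j)%N.
  move=> i j; apply/idP/idP; last exact: Bmono.
  move=> h; rewrite leqNgt; apply/negP => /hBinc hh; by rewrite ltNge h in hh.
pose feas (idx : {ffun 'I_n.+1 -> 'I_k.+1}) :=
  [forall m1 : 'I_n.+1, forall m2 : 'I_n.+1, (m1 <= m2)%N ==> (B (idx m2) <= B (idx m1))] &&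
  [forall m, B (idx m) <= v m].
have feasP : forall idx, feas idx <-> nonincr_bids B idx /\ (forall m, B (idx m) <= v m).
  move=> idx; split.
    case/andP => /forallP h1 /forallP h2; split => // m1 m2 h.
    exact: (implyP (forallP (h1 m1) m2)).
  case=> h1 h2; apply/andP; split; apply/forallP => // m1.
  by apply/forallP => m2; apply/implyP; apply: h1.
have [i0 [hi0a hi0b]] := hfeas.
have fi0 : feas i0 by apply/feasP.
pose Fv (idx : {ffun 'I_n.+1 -> 'I_k.+1}) := \sum_m W m (idx m).
case: (@arg_maxP _ _ _ i0 feas Fv fi0) => ib fis his.
have upper : forall q, inQ B q -> \sum_m \sum_b q m b * W m b <= Fv ib.
  move=> q [h01 hsum hdom].
  apply: le_trans (@main_bound _ _ _ W q _ _ _) _.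
  - by move=> m b; case/andP: (h01 m b).
  - exact: hsum.
  - move=> m1 m2 e c; have := hdom m1 m2 e c.
    have e1 : forall qq : 'I_k.+1 -> R,
        \sum_(b : 'I_k.+1 | B b <= B c) qq b = \sum_(b : 'I_k.+1 | (b <= c)%N) qq b.
      by move=> qq; apply: eq_bigl => b; exact: Ble.
    by rewrite !e1.
  have [/andP [hnon _] _] := HP W 0 ord_max.
  have eH : H W 0 ord_max = Fv (Hopt W 0 ord_max) by [].
  rewrite eH; move: hnon; set hopt := Hopt W 0 ord_max => hnon.
  pose c (m : 'I_n.+1) := Order.arg_max (i0 m) (fun c : 'I_k.+1 => B c <= v m)
      (fun c : 'I_k.+1 => val c).
  have cP : forall m, B (c m) <= v m /\ forall c', B c' <= v m -> (c' <= c m)%N.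
    move=> m; rewrite /c.
    case: (@arg_maxP _ _ _ (i0 m) (fun c : 'I_k.+1 => B c <= v m)
             (fun c : 'I_k.+1 => val c) (hi0b m)) => x hx hmax.
    by split => // c' /hmax.
  have cmono : forall m1 m2 : 'I_n.+1, (m1 <= m2)%N -> (c m2 <= c m1)%N.
    move=> m1 m2 h; apply: (proj2 (cP m1)).
    exact: le_trans (proj1 (cP m2)) (hvdec m1 m2 h).
  pose cl : {ffun 'I_n.+1 -> 'I_k.+1} :=
    [ffun m => if (hopt m <= c m)%N then hopt m else c m].
  have fcl : feas cl.
    apply/andP; split; apply/forallP => m1.
      apply/forallP => m2; apply/implyP => h; apply: Bmono.
      have h1 := implyP (forallP (forallP hnon m1) m2) h.
      have h2 := cmono m1 m2 h.
      rewrite !ffunE; move: h1 h2; case: ifP => a1; case: ifP => a2 /=; lia.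
    apply: le_trans (proj1 (cP m1)); apply: Bmono; rewrite ffunE.
    by case: ifP.
  apply: le_trans (his _ fcl).
  apply: ler_sum => m _; rewrite ffunE; case: ifP => a //.
  apply: ler_sum => t _; rewrite /wvec /w.
  have hb : v m < B (hopt m).
    rewrite ltNge; apply/negP => h; move: (proj2 (cP m) _ h); by rewrite a.
  apply: (@le_trans _ _ 0).
    by case: ifP => _; rewrite ?mulr1 ?mulr0 // subr_le0 ltW.
  by case: ifP => _; rewrite ?mulr1 ?mulr0 // subr_ge0 (proj1 (cP m)).
exists (Fv ib - C); split; split.
- exists ib; have [h1 h2] := (feasP ib).1 fis; split => //.
  by rewrite K2.
- move=> x [idx [h1 h2 ->]]; rewrite K2 lerD2r; apply: his; exact/feasP.
- exists (fun m b => if ib m == b then 1 else 0); split; last by rewrite K1 K3.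
  have [h1 h2] := (feasP ib).1 fis.
  split.
  + by move=> m b; case: eqP => _; rewrite ?ler01 ?lexx.
  + by move=> m; apply: sum_ind1.
  + move=> m1 m2 e c; rewrite !sum_ind.
    have : B (ib m2) <= B (ib m1) by apply: h1; rewrite e.
    case: ifP => a1; case: ifP => a2 //= h.
    by rewrite (le_trans h a1) in a2.
- move=> x [q [hq ->]]; rewrite K1 lerD2r; exact: upper.
Qed.
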